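(* Let $K$ be a compact Hausdorff space, and let $f,g$ be two non-zero elements of $B_{C(K)}$. Then $B_{C(K)}\subset \overline B(f,1)\cup\overline B(g,1)$ if and only if there exist an isolated point $u$ of $K$ and real numbers $c,d$ such that $f=c\mathds{1}_{\{u\}}$, $g=d\mathds{1}_{\{u\}}$ and $cd<0$.
   Context: $C(K)$ is the Banach space of real-valued continuous functions on $K$ with the supremum norm, $B_{C(K)}$ its closed unit ball, and $\overline B(h,r)$ denotes the closed ball in $C(K)$ with center $h$ and radius $r$. $\mathds{1}_{\{u\}}$ is the indicator function of $\{u\}$. *)

(* Defs.v *)
From HB Require Import structures.
From mathcomp Require Import all_boot all_order all_algebra.
From mathcomp Require Import all_classical all_reals all_analysis.
Set Implicit Arguments. Unset Strict Implicit. Unset Printing Implicit Defensive.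
Import Order.TTheory GRing.Theory Num.Theory numFieldNormedType.Exports.
Local Open Scope ring_scope.
Local Open Scope classical_set_scope.

(* Closed ball in C(K) for the sup norm: h \in \overline B(c, r) iff
   sup_x |h x - c x| <= r, i.e. |h x - c x| <= r for every x. *)
Definition in_cball {K : topologicalType} {R : realType}
  (c : K -> R) (r : R) (h : K -> R) : Prop :=
  forall x : K, `|h x - c x| <= r.

Definition in_unit_ball {K : topologicalType} {R : realType} (h : K -> R) : Prop :=
  continuous h /\ in_cball (fun _ => 0) 1 h.

(* Main.v *)
Require Import Defs.
From HB Require Import structures.
From mathcomp Require Import all_boot all_order all_algebra.
From mathcomp Require Import all_classical all_reals all_analysis.
From mathcomp Require Import lra.
Import Order.TTheory GRing.Theory Num.Theory numFieldNormedType.Exports.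
Local Open Scope ring_scope.
Local Open Scope classical_set_scope.

Lemma sep_pts (R : realType) (K : topologicalType)
  (K_compact : compact [set: K]) (K_hausdorff : hausdorff_space K)
  (x1 x2 : K) : x1 <> x2 ->
  exists p : K -> R, [/\ continuous p, p x1 = 0, p x2 = 1 &
     forall x, 0 <= p x <= 1].
Proof.
move=> x12.
have nK := compact_normal K_hausdorff K_compact.
have acc := hausdorff_accessible K_hausdorff.
have d12 : [set x1] `&` [set x2] = set0.
  by apply/seteqP; split => // x [/= -> ].
have [p [cp pA pB rp]] := @urysohn_ext_itv K R nK [set x1] [set x2] 0 1
  (@accessible_closed_set1 K acc x1) (@accessible_closed_set1 K acc x2) d12 ltr01.
exists p; split => //.
- exact: (pA (p x1) (ex_intro2 _ _ x1 erefl erefl)).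
- exact: (pB (p x2) (ex_intro2 _ _ x2 erefl erefl)).
- move=> x; have : range p (p x) by exists x.
  move/rp.
  by rewrite /= in_itv /=.
Qed.

Lemma far (R : realType) (y : R) : y != 0 ->
  1 < `|(if 0 < y then -1 else 1) - y|.
Proof.
move=> y0; case: ifPn => hy.
  rewrite ler0_norm; lra.
have : y < 0 by rewrite lt_neqAle y0 /= leNgt.
move=> {}hy; rewrite ger0_norm; lra.
Qed.

Lemma sgn_helper (R : realType) (a b : R) : 0 <= a * b -> a < 0 -> 0 < b -> False.
Proof. move=> h1 h2 h3; nra. Qed.

Lemma ind_ok (R : realType) (K : topologicalType) (h : K -> R) (c : R) (u : K) :
  (forall x, -1 <= h x <= 1) -> `|h u - c| <= 1 ->
  in_cball (fun x => c * \1_[set u] x) 1 h.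
Proof.
move=> hx hu x; rewrite indicE.
have [->|xu] := eqVneq x u; first by rewrite mem_set // mulr1.
rewrite memNset ?mulr0 ?subr0; last by move=> /= e; rewrite e eqxx in xu.
by rewrite ler_norml.
Qed.

Theorem lemma2p3 (R : realType) (K : topologicalType)
  (K_compact : compact [set: K]) (K_hausdorff : hausdorff_space K)
  (f g : K -> R) (Hf : in_unit_ball f) (Hg : in_unit_ball g)
  (f_nz : f <> (fun _ => 0)) (g_nz : g <> (fun _ => 0)) :
  (forall h : K -> R, in_unit_ball h -> in_cball f 1 h \/ in_cball g 1 h) <->
  (exists u : K, isolated [set: K] u /\
     exists c d : R, f = (fun x => c * \1_[set u] x) /\
                     g = (fun x => d * \1_[set u] x) /\ c * d < 0).
Proof.
have nrm : forall (h : K -> R) x, in_cball (fun _ => 0) 1 h -> -1 <= h x <= 1.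
  by move=> h x /(_ x); rewrite subr0 ler_norml.
split.
- move=> H.
  have key : forall x1 x2, f x1 != 0 -> g x2 != 0 -> x1 = x2.
    move=> x1 x2 fx1 gx2; apply: contrapT => x12.
    have [p [cp p1 p2 p01]] := @sep_pts R K K_compact K_hausdorff _ _ x12.
    pose a : R := if 0 < f x1 then -1 else 1.
    pose b : R := if 0 < g x2 then -1 else 1.
    have hab : (a = -1 \/ a = 1) /\ (b = -1 \/ b = 1).
      by rewrite /a /b; split; case: ifP => _; auto.
    pose h x := a * (1 - p x) + b * p x.
    have : in_unit_ball h.
      split.
        move=> x; rewrite /h; apply: cvgD; apply: cvgM; try exact: cvg_cst.
          by apply: cvgB; [exact: cvg_cst | exact: cp].
        exact: cp.
      move=> x; rewrite subr0 ler_norml /h.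
      have := p01 x; case: hab => [[]->[]->]; lra.
    case/H => /(_ _) hc.
      by have := hc x1; rewrite /h p1 mulr0 addr0 subr0 mulr1 => /(lt_le_trans (far _ _ fx1)); rewrite ltxx.
    by have := hc x2; rewrite /h p2 subrr mulr0 add0r mulr1 => /(lt_le_trans (far _ _ gx2)); rewrite ltxx.
  have [x1 fx1] : exists x, f x != 0.
    apply: contrapT => nx; apply: f_nz; apply/funext => x.
    by apply/eqP; apply: contrapT => fx; apply: nx; exists x; apply/negP.
  have [x2 gx2] : exists x, g x != 0.
    apply: contrapT => nx; apply: g_nz; apply/funext => x.
    by apply/eqP; apply: contrapT => gx; apply: nx; exists x; apply/negP.
  have e12 := key _ _ fx1 gx2; subst x2.
  have fu : forall x, f x != 0 -> x = x1 by move=> x /key/(_ gx2).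
  have gu : forall x, g x != 0 -> x = x1 by move=> x fx; apply/esym/(key _ _ fx1 fx).
  exists x1; split.
    split; first by rewrite inE.
    exists [set x | `|f x1 - f x| < `|f x1|].
      apply: (@cvgr_dist_lt _ _ _ _ _ f); first exact: (proj1 Hf).
      by rewrite normr_gt0.
    apply/seteqP; split => x /=.
      case=> hx _; apply: fu; apply: contraTneq hx => ->.
      by rewrite subr0 ltxx.
    by move=> ->; rewrite subrr normr0 normr_gt0.
  exists (f x1), (g x1); split; [|split].
  - apply/funext => x; rewrite indicE.
    have [->|xu] := eqVneq x x1; first by rewrite mem_set // mulr1.
    rewrite memNset ?mulr0; last by move=> /= e; rewrite e eqxx in xu.
    by apply/eqP; apply: contraNT xu => /fu ->.
  - apply/funext => x; rewrite indicE.
    have [->|xu] := eqVneq x x1; first by rewrite mem_set // mulr1.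
    rewrite memNset ?mulr0; last by move=> /= e; rewrite e eqxx in xu.
    by apply/eqP; apply: contraNT xu => /gu ->.
  - rewrite ltNge; apply/negP => fg.
    have := H (fun _ => if 0 < f x1 then -1 else 1).
    case.
      split; first by move=> x; exact: cvg_cst.
      by move=> x; rewrite subr0; case: ifP => _; rewrite ?normrN normr1.
      by move=> /(_ x1) /(lt_le_trans (far _ _ fx1)); rewrite ltxx.
    move=> /(_ x1); move: (far _ _ gx2).
    have : (0 < f x1) = (0 < g x1).
      move: (fx1) (gx2); rewrite !neq_lt => /orP[] hf /orP[] hg.
      + by rewrite ltNge (ltW hf) ltNge (ltW hg).
      + by exfalso; apply: (@sgn_helper _ _ _ fg hf hg).
      + by exfalso; rewrite mulrC in fg; apply: (@sgn_helper _ _ _ fg hg hf).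
      + by rewrite hf hg.
    move=> ->; move=> /lt_le_trans h /h; rewrite ltxx //.
- case=> u [_ [c [d [ef [eg cd]]]]] h [ch hb].
  have hc : -1 <= c <= 1.
    by have := proj2 Hf u; rewrite ef /= indicE mem_set // mulr1 subr0 ler_norml.
  have hd : -1 <= d <= 1.
    by have := proj2 Hg u; rewrite eg /= indicE mem_set // mulr1 subr0 ler_norml.
  have hu := nrm h u hb.
  have hx : forall x, -1 <= h x <= 1 by move=> x; exact: nrm.
  rewrite ef eg.
  have [c0|c0] := ltP 0 c.
    have d0 : d < 0 by nra.
    have [h0|h0] := leP 0 (h u).
      by left; apply: ind_ok => //; rewrite ler_norml; lra.
    by right; apply: ind_ok => //; rewrite ler_norml; lra.
  have d0 : 0 < d by nra.
  have [h0|h0] := leP 0 (h u).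
    by right; apply: ind_ok => //; rewrite ler_norml; lra.
  by left; apply: ind_ok => //; rewrite ler_norml; lra.
Qed.
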